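(* Let $\mathcal C\subseteq(S^2)^n$ be a vector trifferent code with $|\mathcal C|\ge2$. Then \[ \binom{|\mathcal C|}{2}\cdot \mathbb E_{\{x,y\}}\bigl[2^{A(x,y)}\bigr]\le 3^n, \] where the expectation is over a uniformly random $2$-element subset $\{x,y\}$ of $\mathcal C$ and $A(x,y)=|\{i\in[n]:\langle x_i,y_i\rangle\neq0\}|$. Equivalently $\sum_{\{x,y\}\subseteq\mathcal C,\,x\ne y}2^{A(x,y)}\le 3^n$.
   Context: $S^2$ is the unit sphere in $\mathbb R^3$. A vector trifferent code of block length $n$ is a subset $\mathcal C\subseteq(S^2)^n$ such that for any three distinct $x,y,z\in\mathcal C$ there is $i\in[n]$ with $x_i,y_i,z_i$ mutually orthogonal. *)

(* Defs.v *)
From HB Require Import structures.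
From mathcomp Require Import all_boot all_order all_algebra.
From mathcomp Require Import reals.
Set Implicit Arguments. Unset Strict Implicit. Unset Printing Implicit Defensive.
Import Order.TTheory GRing.Theory Num.Theory.
Local Open Scope ring_scope.

Definition dot3 (R : realType) (u v : 'rV[R]_3) : R :=
  \sum_(k < 3) u 0 k * v 0 k.

Definition on_S2 (R : realType) (u : 'rV[R]_3) : Prop := dot3 u u = 1.

Definition word (R : realType) (n : nat) := {ffun 'I_n -> 'rV[R]_3}.

Definition mutually_orth (R : realType) (u v w : 'rV[R]_3) : Prop :=
  dot3 u v = 0 /\ dot3 v w = 0 /\ dot3 u w = 0.

Definition vector_trifferent (R : realType) (n : nat) (C : seq (word R n)) : Prop :=
  uniq C /\
  (forall x, x \in C -> forall i, on_S2 (x i)) /\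
  (forall x y z, x \in C -> y \in C -> z \in C ->
     x != y -> y != z -> x != z ->
     exists i : 'I_n, mutually_orth (x i) (y i) (z i)).

Definition agree_cnt (R : realType) (n : nat) (x y : word R n) : nat :=
  #|[set i : 'I_n | dot3 (x i) (y i) != 0]|.

(* Main.v *)
Require Import Defs.
From HB Require Import structures.
From mathcomp Require Import all_boot all_order all_algebra.
From mathcomp Require Import reals.
From mathcomp Require Import mxtens ring lra.
Import Order.TTheory GRing.Theory Num.Theory.
Set Implicit Arguments. Unset Strict Implicit. Unset Printing Implicit Defensive.
Local Open Scope ring_scope.

Section Tens.
Variable R : realType.

Fixpoint dd (k : nat) : nat := if k is k'.+1 then (dd k' * 3)%N else 1%N.

Lemma ddE k : dd k = (3 ^ k)%N.
Proof. by elim: k => //= k ->; rewrite expnS mulnC. Qed.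

Variable I : eqType.

Fixpoint tp (F : I -> 'M[R]_3) (s : seq I) : 'M[R]_(dd (size s)) :=
  match s return 'M[R]_(dd (size s)) with
  | [::] => 1%:M
  | a :: s' => tp F s' *t F a
  end.

Lemma trace_tens m n (A : 'M[R]_m) (B : 'M[R]_n) : \tr (A *t B) = \tr A * \tr B.
Proof. by rewrite /mxtrace mulr_sum; apply: eq_bigr => k _; rewrite mxE. Qed.

Lemma tp_mul F G s : tp F s *m tp G s = tp (fun a => F a *m G a) s.
Proof. by elim: s => [|a s IH] /=; [rewrite mul1mx | rewrite tensmx_mul IH]. Qed.

Lemma tp_tr F s : (tp F s)^T = tp (fun a => (F a)^T) s.
Proof. by elim: s => [|a s IH] /=; [rewrite trmx1 | rewrite trmx_tens IH]. Qed.

Lemma tp_trace F s : \tr (tp F s) = \prod_(a <- s) \tr (F a).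
Proof.
elim: s => [|a s IH] /=; first by rewrite mxtrace1 big_nil.
by rewrite trace_tens IH big_cons mulrC.
Qed.

Lemma tp_zero F s a : a \in s -> F a = 0 -> tp F s = 0.
Proof.
elim: s => [|b s IH] //=; rewrite inE => /orP [/eqP <- H | H H'].
  by rewrite H tensmx0.
by rewrite (IH H H') tens0mx.
Qed.

Lemma tp_ext F G s : (forall a, F a = G a) -> tp F s = tp G s.
Proof. by move=> H; elim: s => [|a s IH] //=; rewrite IH H. Qed.

End Tens.
Section Geo.
Variable R : realType.
Implicit Types x y z w : 'rV[R]_3.

Definition outer x : 'M[R]_3 := x^T *m x.

Lemma dotC x y : dot3 x y = dot3 y x.
Proof. by rewrite /dot3; apply: eq_bigr => k _; rewrite mulrC. Qed.

Lemma row_dot x z : x *m z^T = (dot3 x z)%:M.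
Proof.
apply/matrixP => i j; rewrite (ord1 i) (ord1 j) !mxE /dot3 /=.
by apply: eq_bigr => k _; rewrite !mxE.
Qed.

Lemma outer_mul x z : outer x *m outer z = dot3 x z *: (x^T *m z).
Proof.
by rewrite /outer mulmxA -(mulmxA x^T) row_dot mul_mx_scalar scalemxAl.
Qed.

Lemma outer_orth x z : dot3 x z = 0 -> outer x *m outer z = 0.
Proof. by move=> h; rewrite outer_mul h scale0r. Qed.

Lemma outer_idem x : dot3 x x = 1 -> outer x *m outer x = outer x.
Proof. by move=> h; rewrite outer_mul h scale1r. Qed.

Lemma outer_tr x : (outer x)^T = outer x.
Proof. by rewrite /outer trmx_mul trmxK. Qed.

Lemma outer_trace x : \tr (outer x) = dot3 x x.
Proof. by rewrite /outer mxtrace_mulC row_dot /mxtrace big_ord1 mxE. Qed.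

Definition ON x y z := [/\ dot3 x x = 1, dot3 y y = 1 & dot3 z z = 1] /\
  [/\ dot3 x y = 0, dot3 y z = 0 & dot3 x z = 0].

Lemma frame x y z : ON x y z -> outer x + outer y + outer z = 1%:M.
Proof.
case=> [[xx yy zz] [xy yz xz]].
pose M : 'M[R]_(1 + (1 + 1), 3) := col_mx x (col_mx y z).
have h1 : M *m M^T = 1%:M.
  rewrite /M tr_col_mx tr_col_mx !mul_col_row !mul_mx_row !mul_col_mx ?mul_mx_row !row_dot.
  rewrite xx yy zz xy yz xz (dotC y x) (dotC z y) (dotC z x) xy yz xz.
  have s0 : forall k, (0 : R)%:M = 0 :> 'M[R]_k.
    by move=> k; apply/matrixP => i j; rewrite !mxE mul0rn.
  by rewrite !s0 row_mx0 col_mx0 -!scalar_mx_block.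
have h2 := mulmx1C h1.
rewrite -h2 /M tr_col_mx tr_col_mx !mul_row_col /outer addrA //.
Qed.


Definition Qm x y : 'M[R]_3 :=
  if dot3 x y == 0 then 1%:M - outer x - outer y else 1%:M - outer x.

Lemma Qm_tr x y : (Qm x y)^T = Qm x y.
Proof. by rewrite /Qm; case: ifP => _; rewrite !raddfB /= trmx1 !outer_tr. Qed.

Lemma Qm_idem x y : dot3 x x = 1 -> dot3 y y = 1 -> Qm x y *m Qm x y = Qm x y.
Proof.
move=> hx hy; rewrite /Qm; case: ifP => [/eqP h|_].
  have h' : dot3 y x = 0 by rewrite dotC.
  rewrite !mulmxBl !mulmxBr !mul1mx !mulmx1 !outer_idem // !outer_orth //.
  by rewrite !subr0 !subrr !subr0.
rewrite !mulmxBl !mulmxBr !mul1mx !mulmx1 !outer_idem //.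
by rewrite subrr subr0.
Qed.

Lemma Qm_trace x y : dot3 x x = 1 -> dot3 y y = 1 ->
  \tr (Qm x y) = if dot3 x y == 0 then 1 else 2.
Proof.
move=> hx hy; rewrite /Qm; case: ifP => _; rewrite !raddfB /= mxtrace1 !outer_trace hx ?hy.
  lra.
lra.
Qed.

Lemma ON_Qm x y z : ON x y z -> Qm x y = outer z.
Proof.
move=> h; have := frame h; case: h => _ [/eqP xy _ _] E.
rewrite /Qm xy -E; apply/eqP; rewrite !subr_eq; apply/eqP.
by rewrite -addrA addrC (addrC (outer y)).
Qed.

Lemma ON_perm1 x y z : ON x y z -> ON y x z.
Proof. by case=> [[a b c] [d e f]]; split; split; rewrite // dotC. Qed.

Lemma ON_perm2 x y z : ON x y z -> ON x z y.
Proof. by case=> [[a b c] [d e f]]; split; split; rewrite // dotC. Qed.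

Lemma Qm_first z w : dot3 z z = 1 -> outer z *m Qm z w = 0.
Proof.
move=> hz; rewrite /Qm; case: ifP => [/eqP h|_];
  rewrite !mulmxBr mulmx1 outer_idem // ?outer_orth // ?subr0; exact: subrr.
Qed.


Lemma proj_trace N (P : 'M[R]_N) : P^T = P -> P *m P = P -> \tr P <= N%:R.
Proof.
move=> hT hP.
have h1 : forall i, P i i <= 1.
  move=> i.
  have e : P i i = \sum_j P i j ^+ 2.
    rewrite -{1}hP mxE; apply: eq_bigr => j _.
    by rewrite -{2}hT mxE expr2.
  have le : P i i ^+ 2 <= P i i.
    rewrite [X in _ <= X]e (bigD1 i) //= lerDl.
    by apply: sumr_ge0 => j _; apply: sqr_ge0.
  rewrite expr2 in le; nra.
rewrite /mxtrace -[N in N%:R]card_ord -sumr_const.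
by apply: ler_sum => i _.
Qed.

End Geo.

Section Main.
Variables (R : realType) (n N : nat) (W : 'I_N -> word R n).
Hypothesis Wdist : forall i j, i != j -> W i != W j.
Hypothesis Wunit : forall i a, dot3 (W i a) (W i a) = 1.
Hypothesis Wtrif : forall i j k, i != j -> j != k -> i != k ->
  exists a, mutually_orth (W i a) (W j a) (W k a).

Lemma ON_all (x y z : 'rV[R]_3) : ON x y z ->
  Qm x y = outer z /\ Qm y x = outer z /\ Qm x z = outer y /\ Qm z x = outer y /\
      Qm y z = outer x /\ Qm z y = outer x.
Proof.
move=> h; do ! split; apply: ON_Qm.
- exact: h.
- exact: ON_perm1 h.
- exact: ON_perm2 h.
- exact: ON_perm1 (ON_perm2 h).
- exact: ON_perm2 (ON_perm1 h).
- exact: ON_perm2 (ON_perm1 (ON_perm2 h)).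
Qed.

Lemma trip i j k : i != j -> j != k -> i != k ->
  exists a, ON (W i a) (W j a) (W k a).
Proof.
move=> h1 h2 h3; have [a [d1 [d2 d3]]] := Wtrif h1 h2 h3.
by exists a; split; split.
Qed.

Lemma ON_orth (x y z : 'rV[R]_3) : ON x y z ->
  outer x *m outer y = 0 /\ outer y *m outer x = 0 /\ outer x *m outer z = 0 /\
      outer z *m outer x = 0 /\ outer y *m outer z = 0 /\ outer z *m outer y = 0.
Proof.
case=> _ [a b c]; do ! split; apply: outer_orth; by rewrite // dotC.
Qed.

Definition QQ (p : 'I_N * 'I_N) (a : 'I_n) := Qm (W p.1 a) (W p.2 a).

Lemma cross (p q : 'I_N * 'I_N) : (p.1 < p.2)%N -> (q.1 < q.2)%N -> p != q ->
  exists a, QQ p a *m QQ q a = 0.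
Proof.
case: p => i j; case: q => k l /= hij hkl hne.
have nij : i != j by rewrite neq_ltn hij.
have nkl : k != l by rewrite neq_ltn hkl.
rewrite /QQ /=.
have [eik|nik] := eqVneq i k.
  subst k.
  have njl : j != l by apply: contraNneq hne => ->.
  have [a h] := trip nij njl nkl; exists a.
  have [e1 [_ [e3 _]]] := ON_all h.
  have [_ [_ [_ [_ [_ o]]]]] := ON_orth h.
  by rewrite e1 e3.
have [eil|nil] := eqVneq i l.
  subst l.
  have njk : j != k by rewrite neq_ltn (ltn_trans hkl hij) orbT.
  have [a h] := trip nij njk nik; exists a.
  have [e1 [_ [_ [e4 _]]]] := ON_all h.
  have [_ [_ [_ [_ [_ o]]]]] := ON_orth h.
  by rewrite e1 e4.
have [ejk|njk] := eqVneq j k.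
  subst k.
  have nil' : i != l by [].
  have [a h] := trip nij nkl nil'; exists a.
  have [e1 [_ [_ [_ [e5 _]]]]] := ON_all h.
  have [_ [_ [_ [o _]]]] := ON_orth h.
  by rewrite e1 e5.
have [ejl|njl] := eqVneq j l.
  subst l.
  have nkj : k != j by [].
  have [a h] := trip nij njk nik; exists a.
  have [e1 [_ [_ [_ [_ e6]]]]] := ON_all h.
  have [_ [_ [_ [o _]]]] := ON_orth h.
  by rewrite e1 e6.
have [a h] := trip nij njk nik; exists a.
have [e1 _] := ON_all h.
case: h => [[_ _ hk] _].
by rewrite e1 Qm_first.
Qed.


Definition PP p := tp (QQ p) (enum 'I_n).

Lemma trPP p : \tr (PP p) = (2 ^ agree_cnt (W p.1) (W p.2))%:R.
Proof.
rewrite /PP tp_trace big_enum /=.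
rewrite (eq_bigr (fun a => if dot3 (W p.1 a) (W p.2 a) == 0 then 1 else 2)); last first.
  by move=> a _; rewrite /QQ Qm_trace.
rewrite (bigID (fun a => dot3 (W p.1 a) (W p.2 a) == 0)) /=.
rewrite big1; last by move=> a ->.
rewrite mul1r (eq_bigr (fun _ => 2)); last by move=> a /negbTE ->.
rewrite prodr_const natrX /agree_cnt cardsE.
congr (_ ^+ _); apply: eq_card => a; by rewrite !inE.
Qed.

Lemma main_bound :
  \sum_(p : 'I_N * 'I_N | (p.1 < p.2)%N) ((2 ^ agree_cnt (W p.1) (W p.2))%:R : R)
    <= (3 ^ n)%:R.
Proof.
pose S := \sum_(p : 'I_N * 'I_N | (p.1 < p.2)%N) PP p.
have ST : S^T = S.
  rewrite /S raddf_sum; apply: eq_bigr => p _.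
  by rewrite /= /PP tp_tr; apply: tp_ext => a; rewrite /QQ Qm_tr.
have SS : S *m S = S.
  rewrite /S mulmx_suml; apply: eq_bigr => p hp.
  rewrite mulmx_sumr (bigD1 p) //= big1 ?addr0.
    by rewrite /PP tp_mul; apply: tp_ext => a; rewrite /QQ Qm_idem.
  move=> q /andP [hq hqp].
  have hpq : p != q by rewrite eq_sym.
  have [a ha] := cross hp hq hpq.
  by rewrite /PP tp_mul (tp_zero (a := a)) // mem_enum.
have := proj_trace ST SS.
rewrite raddf_sum /=.
under eq_bigr do rewrite trPP.
have e : dd (size (enum 'I_n)) = (3 ^ n)%N by rewrite size_enum_ord ddE.
by rewrite e.
Qed.

End Main.

Local Close Scope ring_scope.
Unset Implicit Arguments.

Theorem mainTheorem7 (R : realType) (n : nat) (C : seq (word R n)) :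
  vector_trifferent C -> (2 <= size C)%N ->
  (\sum_(i < size C) \sum_(j < size C | (i < j)%N)
      2 ^ agree_cnt (nth 0%R C i) (nth 0%R C j) <= 3 ^ n)%N.
Proof.
move=> [hu [hs ht]] _.
pose W := fun i : 'I_(size C) => nth 0%R C i.
have Wdist : forall i j, i != j -> W i != W j.
  by move=> i j hij; rewrite /W nth_uniq.
have Wunit : forall i a, dot3 (W i a) (W i a) = 1%R.
  by move=> i a; apply: hs; apply: mem_nth.
have Wtrif : forall i j k, i != j -> j != k -> i != k ->
    exists a, mutually_orth (W i a) (W j a) (W k a).
  move=> i j k h1 h2 h3; apply: ht; rewrite ?mem_nth //; exact: Wdist.
have := main_bound Wunit Wtrif.
rewrite pair_big_dep /= -(ler_nat R) natr_sum.
by [].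
Qed.
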